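(* Let $(X,d)$ be a metric space such that $d(v,v')<\pi/2$ for all $v,v'\in X$, let $T\colon X\to X$ be a vicinal mapping, let $p\in X$, and let $\{x_n\}$ be a sequence in $X$ such that $\mathrm{AC}(\{x_n\})=\{p\}$ and $d(Tx_n,x_n)\to 0$. Then $Tp=p$.
   Context: The asymptotic center of $\{x_n\}$ is $\mathrm{AC}(\{x_n\})=\{z\in X:\limsup_n d(x_n,z)=\inf_{y\in X}\limsup_n d(x_n,y)\}$. With $C_z=\cos d(Tz,z)$, $T$ is vicinal if for all $x,y\in X$: $\bigl(C_x^2(1+C_y^2)+C_y^2(1+C_x^2)\bigr)\cos d(Tx,Ty)\ge C_x^2(1+C_y^2)\cos d(Tx,y)+C_y^2(1+C_x^2)\cos d(Ty,x)$. *)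

(* Defs.v *)
From Stdlib Require Import Reals.
Open Scope R_scope.

Definition is_metric {X : Type} (d : X -> X -> R) : Prop :=
  (forall x y, 0 <= d x y) /\
  (forall x y, d x y = 0 <-> x = y) /\
  (forall x y, d x y = d y x) /\
  (forall x y z, d x z <= d x y + d y z).

Definition is_limsup (u : nat -> R) (L : R) : Prop :=
  (forall eps, 0 < eps -> exists N, forall n, (N <= n)%nat -> u n < L + eps) /\
  (forall eps, 0 < eps -> forall N, exists n, (N <= n)%nat /\ L - eps < u n).

Definition in_AC {X : Type} (d : X -> X -> R) (x : nat -> X) (z : X) : Prop :=
  exists L, is_limsup (fun n => d (x n) z) L /\
    forall y L', is_limsup (fun n => d (x n) y) L' -> L <= L'.

Definition Cz {X : Type} (d : X -> X -> R) (T : X -> X) (z : X) : R :=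
  cos (d (T z) z).

Definition vicinal {X : Type} (d : X -> X -> R) (T : X -> X) : Prop :=
  forall x y : X,
    let Cx := Cz d T x in let Cy := Cz d T y in
    (Cx ^ 2 * (1 + Cy ^ 2) + Cy ^ 2 * (1 + Cx ^ 2)) * cos (d (T x) (T y))
    >= Cx ^ 2 * (1 + Cy ^ 2) * cos (d (T x) y)
       + Cy ^ 2 * (1 + Cx ^ 2) * cos (d (T y) x).

(* Main.v *)
Require Import Defs.
From Stdlib Require Import Reals.
From Stdlib Require Import Lra Psatz Lia.
From Coquelicot Require Import Coquelicot.
Open Scope R_scope.

Lemma cos_lip a b : Rabs (cos a - cos b) <= Rabs (a - b).
Proof.
  destruct (MVT_abs cos (fun x => - sin x) b a) as [c [Hc _]].
  { intros c _. apply derivable_pt_lim_cos. }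
  rewrite Hc. pose proof (SIN_bound c).
  rewrite <- (Rmult_1_l (Rabs (a - b))) at 2.
  apply Rmult_le_compat_r; [apply Rabs_pos|].
  rewrite Rabs_Ropp. apply Rabs_le; lra.
Qed.

Lemma cos_gap x y e : 0 <= x -> y <= PI/2 -> 0 < e <= PI/2 -> x + e <= y ->
  1 - cos e <= cos x - cos y.
Proof.
  intros Hx Hy He Hxy.
  pose proof PI_RGT_0.
  assert (cos y <= cos (x + e)).
  { destruct (Rle_lt_or_eq _ _ Hxy) as [H1|H1].
    - left. apply cos_decreasing_1; lra.
    - rewrite H1; lra. }
  rewrite cos_plus in H0.
  assert (0 <= cos x) by (apply cos_ge_0; lra).
  assert (0 <= sin x) by (apply sin_ge_0; lra).
  assert (0 <= cos e) by (apply cos_ge_0; lra).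
  assert (0 <= sin e) by (apply sin_ge_0; lra).
  pose proof (sin2_cos2 x). pose proof (sin2_cos2 e).
  unfold Rsqr in *.
  assert (1 <= sin x + cos x) by nra.
  assert (1 <= sin e + cos e) by nra.
  assert (cos e <= 1) by (pose proof (COS_bound e); lra).
  nra.
Qed.

Lemma key_est (X : Type) (d : X -> X -> R) (T : X -> X) (p : X) (x : nat -> X)
  (Hd : is_metric d)
  (Hdiam : forall v v' : X, d v v' < PI / 2)
  (HT : vicinal d T)
  (Hcv : Un_cv (fun n => d (T (x n)) (x n)) 0) :
  forall eps, 0 < eps -> exists N, forall n, (N <= n)%nat ->
    d (x n) (T p) < d (x n) p + eps.
Proof.
  destruct Hd as [Hpos [Hzero [Hsym Htri]]].
  pose proof PI_RGT_0. pose proof PI2_1.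
  intros eps0 Heps0.
  set (eps := Rmin eps0 1).
  assert (Heps : 0 < eps <= 1) by (unfold eps; split; [apply Rmin_glb_lt; lra | apply Rmin_r]).
  assert (Hle : eps <= eps0) by apply Rmin_l.
  set (eta := 1 - cos eps).
  assert (Heta : 0 < eta).
  { unfold eta. assert (cos eps < cos 0) by (apply cos_decreasing_1; lra).
    rewrite cos_0 in H1. lra. }
  destruct (Hcv (Rmin (eta/12) (1/4))) as [N HN].
  { apply Rmin_glb_lt; lra. }
  exists N. intros n Hn. specialize (HN n Hn). unfold R_dist in HN.
  rewrite Rminus_0_r, Rabs_right in HN by (apply Rle_ge, Hpos).
  assert (Hd1 : d (T (x n)) (x n) < eta/12) by (eapply Rlt_le_trans; [exact HN| apply Rmin_l]).
  assert (Hd2 : d (T (x n)) (x n) < 1/4) by (eapply Rlt_le_trans; [exact HN| apply Rmin_r]).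
  set (dl := d (T (x n)) (x n)) in *.
  assert (HVW : cos (d (x n) p) - cos (d (x n) (T p)) <= 12 * dl).
  { specialize (HT (x n) p). unfold Cz in HT. cbv zeta in HT.
    fold dl in HT.
    rewrite (Hsym (T p) (x n)) in HT.
    set (a := cos dl) in *. set (c := cos (d (T p) p)) in *.
    set (u := cos (d (T (x n)) (T p))) in *.
    set (v := cos (d (T (x n)) p)) in *.
    set (W := cos (d (x n) (T p))) in *.
    set (V := cos (d (x n) p)) in *.
    assert (Ha : 3/4 <= a <= 1).
    { pose proof (cos_lip dl 0). rewrite cos_0, Rminus_0_r in H1.
      rewrite (Rabs_right dl) in H1 by (apply Rle_ge, Hpos).
      pose proof (COS_bound dl). apply Rabs_le_between in H1. unfold a; lra. }
    assert (Hc : c^2 <= 1) by (pose proof (COS_bound (d (T p) p)); unfold c; nra).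
    assert (Hc0 : 0 <= c^2) by nra.
    assert (Hu : u <= W + dl).
    { pose proof (cos_lip (d (T (x n)) (T p)) (d (x n) (T p))).
      pose proof (Htri (x n) (T (x n)) (T p)). pose proof (Htri (T (x n)) (x n) (T p)).
      rewrite (Hsym (x n) (T (x n))) in H2. fold dl in H2, H3.
      apply Rabs_le_between in H1. pose proof (Rle_abs (d (T (x n)) (T p) - d (x n) (T p))).
      pose proof (Rabs_le (d (T (x n)) (T p) - d (x n) (T p)) dl).
      unfold u, W; lra. }
    assert (Hv : V - dl <= v).
    { pose proof (cos_lip (d (T (x n)) p) (d (x n) p)).
      pose proof (Htri (x n) (T (x n)) p). pose proof (Htri (T (x n)) (x n) p).
      rewrite (Hsym (x n) (T (x n))) in H2. fold dl in H2, H3.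
      apply Rabs_le_between in H1.
      pose proof (Rabs_le (d (T (x n)) p - d (x n) p) dl).
      unfold v, V; lra. }
    set (A := a^2) in *. set (B := c^2) in *.
    assert (HA : 9/16 <= A <= 1) by (unfold A; nra).
    set (Q := A * (1 + B)) in *. set (Rr := B * (1 + A)) in *.
    assert (HQ : 1/2 <= Q <= 2) by (unfold Q; nra).
    assert (HR : 0 <= Rr <= 2) by (unfold Rr; nra).
    assert (Hdl0 : 0 <= dl) by apply Hpos.
    assert (Q * (V - W) <= 6 * dl).
    { assert ((Q + Rr) * u <= (Q + Rr) * (W + dl)) by (apply Rmult_le_compat_l; lra).
      assert (Q * (V - dl) <= Q * v) by (apply Rmult_le_compat_l; lra).
      nra. }
    nra. }
  destruct (Rlt_or_le (d (x n) (T p)) (d (x n) p + eps)) as [H1|H1].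
  - lra.
  - exfalso. pose proof (cos_gap (d (x n) p) (d (x n) (T p)) eps (Hpos _ _)
      (Rlt_le _ _ (Hdiam _ _)) ltac:(lra) H1). fold eta in H2. lra.
Qed.

Theorem lemma4p4 (X : Type) (d : X -> X -> R) (T : X -> X) (p : X) (x : nat -> X)
  (Hd : is_metric d)
  (Hdiam : forall v v' : X, d v v' < PI / 2)
  (HT : vicinal d T)
  (HAC : forall z : X, in_AC d x z <-> z = p)
  (Hcv : Un_cv (fun n => d (T (x n)) (x n)) 0) :
  T p = p.
Proof.
  pose proof (key_est X d T p x Hd Hdiam HT Hcv) as Hk.
  destruct Hd as [Hpos [Hzero [Hsym Htri]]].
  pose proof PI_RGT_0.
  apply HAC.
  destruct (proj2 (HAC p) eq_refl) as [Lp [HLp Hmin]].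
  destruct (ex_LimSup_seq (fun n => d (x n) (T p))) as [l Hl].
  destruct l as [l| |]; simpl in Hl.
  2:{ exfalso. destruct (Hl (PI/2) 0%nat) as [n [_ Hn]].
      pose proof (Hdiam (x n) (T p)). lra. }
  2:{ exfalso. destruct (Hl 0) as [N HN]. specialize (HN N (le_n N)).
      pose proof (Hpos (x N) (T p)). lra. }
  assert (HL : is_limsup (fun n => d (x n) (T p)) l).
  { split.
    - intros e He. destruct (Hl (mkposreal e He)) as [_ H2]. exact H2.
    - intros e He. destruct (Hl (mkposreal e He)) as [H1 _]. exact H1. }
  exists l. split; [exact HL|].
  assert (l <= Lp).
  { destruct (Rle_or_lt l Lp) as [H1|H1]; [exact H1|exfalso].
    set (e := (l - Lp)/3).
    assert (He : 0 < e) by (unfold e; lra).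
    destruct (proj1 HLp e He) as [N1 HN1].
    destruct (Hk e He) as [N2 HN2].
    destruct (proj2 HL e He (Nat.max N1 N2)) as [n [Hn Hn2]].
    specialize (HN1 n ltac:(lia)). specialize (HN2 n ltac:(lia)).
    simpl in *. unfold e in *. lra. }
  intros y L' HL'. specialize (Hmin y L' HL'). lra.
Qed.
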